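(* Let $(y_t)_{t\in\mathbb{Z}}$ be a strictly stationary sequence of random vectors in $\mathbb{R}^q$ with marginal law $P_0$, and let $P_T:=T^{-1}\sum_{t=1}^T\delta_{y_t}$. Let $k$ be a measurable, symmetric, positive definite, characteristic kernel on $\mathbb{R}^q$ with $\sup_y|k(y,y)|\le 1$, and let $\mathcal{D}$ be the associated Maximum Mean Discrepancy. Let $\{P_\theta;\theta\in\Theta\}$, $\Theta\subset\mathbb{R}^d$, be a family of probability measures on $\mathbb{R}^q$ and $\hat\theta_T\in\arg\min_{\theta\in\Theta}\mathcal{D}(P_\theta,P_T)$. Assume $\Sigma_T=o(T)$ as $T\to\infty$ and the identifiability conditions: (i) the function $\theta\mapsto\mathcal{D}(P_\theta,P_0)$ has a unique minimizer $\theta^*\in\Theta$; and (ii) for every $r>0$, $\inf_{\{\theta\in\Theta:\|\theta-\theta^*\|\ge r\}}\mathcal{D}(P_\theta,P_0)>\mathcal{D}(P_{\theta^*},P_0)$. Then $\hat\theta_T\to\theta^*$ in probability as $T\to\infty$.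
   Context: The kernel $k$ has RKHS $\mathcal{H}$ with $k(u,v)=\langle\Phi(u),\Phi(v)\rangle_{\mathcal{H}}$. For probability measures $P_1,P_2$ on $\mathbb{R}^q$, $\mathcal{D}^2(P_1,P_2)=\mathbb{E}_{X,X'\sim P_1}k(X,X')-2\mathbb{E}_{X\sim P_1,Y'\sim P_2}k(X,Y')+\mathbb{E}_{Y,Y'\sim P_2}k(Y,Y')$ (independent draws). For $t>0$, $\varrho_t:=\left|\mathbb{E}\left\langle k(y_t,\cdot)-\mathbb{E}[k(y_t,\cdot)],\,k(y_0,\cdot)-\mathbb{E}[k(y_0,\cdot)]\right\rangle_{\mathcal{H}}\right|$ and $\Sigma_T:=\sum_{s=1}^T\varrho_s$. *)

(* Defs.v *)
From HB Require Import structures.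
From mathcomp Require Import all_boot all_order all_algebra.
From mathcomp Require Import all_classical all_reals all_analysis.
Set Implicit Arguments. Unset Strict Implicit. Unset Printing Implicit Defensive.
Import Order.TTheory GRing.Theory Num.Theory.
Import numFieldNormedType.Exports.
Local Open Scope classical_set_scope.
Local Open Scope ring_scope.

(* R^q is represented by q.-tuple R, with the product (= Borel) sigma-algebra. *)
Notation Rq R q := (q.-tuple R).

Definition RInt d (T : measurableType d) (R : realType)
  (mu : set T -> \bar R) (f : T -> R) : R :=
  fine (\int[mu]_(x in [set: T]) (f x)%:E).

(* squared MMD, E_{X,X'~P1} k - 2 E_{X~P1,Y'~P2} k + E_{Y,Y'~P2} k,
   expectations over independent draws written as iterated integrals *)
Definition MMD2 (R : realType) (q : nat) (k : Rq R q -> Rq R q -> R)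
  (P1 P2 : set (Rq R q) -> \bar R) : R :=
  RInt P1 (fun x => RInt P1 (fun x' => k x x'))
  - 2 * RInt P1 (fun x => RInt P2 (fun y' => k x y'))
  + RInt P2 (fun y => RInt P2 (fun y' => k y y')).

Definition MMD (R : realType) (q : nat) (k : Rq R q -> Rq R q -> R)
  (P1 P2 : set (Rq R q) -> \bar R) : R := Num.sqrt (MMD2 k P1 P2).

Definition kernel_symmetric (R : realType) (q : nat) (k : Rq R q -> Rq R q -> R) :=
  forall x y, k x y = k y x.

Definition kernel_posdef (R : realType) (q : nat) (k : Rq R q -> Rq R q -> R) :=
  forall (n : nat) (x : 'I_n -> Rq R q) (c : 'I_n -> R),
    0 <= \sum_(i < n) \sum_(j < n) c i * c j * k (x i) (x j).

Definition kernel_measurable (R : realType) (q : nat) (k : Rq R q -> Rq R q -> R) :=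
  measurable_fun [set: Rq R q * Rq R q] (fun p => k p.1 p.2).

(* characteristic: the kernel mean embedding P |-> E_P k(X,.) is injective on
   probability measures; since ||mu_P - mu_Q||_H^2 = MMD2 k P Q this reads: *)
Definition kernel_characteristic (R : realType) (q : nat) (k : Rq R q -> Rq R q -> R) :=
  forall P Q : probability (Rq R q) R, MMD2 k P Q = 0 ->
    forall A, measurable A -> P A = Q A.

(* strict stationarity of (y_t)_{t in Z}: all finite-dimensional distributions
   are shift invariant (tested on measurable rectangles) *)
Definition strictly_stationary d (Omega : measurableType d) (R : realType) (q : nat)
  (P : probability Omega R) (y : int -> Omega -> Rq R q) :=
  forall (n : nat) (ts : 'I_n -> int) (h : int) (B : 'I_n -> set (Rq R q)),
    (forall i, measurable (B i)) ->
    P [set w | forall i, B i (y (ts i) w)] =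
    P [set w | forall i, B i (y (ts i + h)%R w)].

Definition empirical d (Omega : measurableType d) (R : realType) (q : nat)
  (y : int -> Omega -> Rq R q) (T : nat) (w : Omega) : set (Rq R q) -> \bar R :=
  fun A => ((T%:R)^-1 * \sum_(t < T) (\1_A (y (t.+1)%:Z w) : R))%:E.

(* rho_t = | E < k(y_t,.) - E k(y_t,.), k(y_0,.) - E k(y_0,.) >_H |, unfolded with
   the reproducing property: <k(u,.), mu0> = int k(u,x) dP0(x) and
   <mu0, mu0> = int int k dP0 dP0, where mu0 = E k(y_0,.) = E k(y_t,.) (P0 is the
   common marginal law) *)
Definition rho d (Omega : measurableType d) (R : realType) (q : nat)
  (P : probability Omega R) (y : int -> Omega -> Rq R q)
  (k : Rq R q -> Rq R q -> R) (t : int) : R :=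
  let P0 := pushforward P (y 0) in
  let m0 := fun u => RInt P0 (fun x => k u x) in
  let M := RInt P0 (fun x => RInt P0 (fun x' => k x x')) in
  `| RInt P (fun w => k (y t w) (y 0 w) - m0 (y t w) - m0 (y 0 w) + M) |.

Definition Sigma d (Omega : measurableType d) (R : realType) (q : nat)
  (P : probability Omega R) (y : int -> Omega -> Rq R q)
  (k : Rq R q -> Rq R q -> R) (T : nat) : R :=
  \sum_(s < T) rho P y k (s.+1)%:Z.

(* Main.v *)
Require Import Defs.
From HB Require Import structures.
From mathcomp Require Import all_boot all_order all_algebra.
From mathcomp Require Import all_classical all_reals all_analysis.
From mathcomp Require Import measurable_realfun.
From mathcomp Require Import lra ring.
Import Order.TTheory GRing.Theory Num.Theory.
Import numFieldNormedType.Exports.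
Local Open Scope classical_set_scope.
Local Open Scope ring_scope.
Set Implicit Arguments. Unset Strict Implicit. Unset Printing Implicit Defensive.
Section RIntLemmas.
Context d (T : measurableType d) (R : realType) (mu : probability T R).

Definition bm (f : T -> R) := measurable_fun setT f /\ exists M : R, forall x, `|f x| <= M.

Lemma bm_integrable f : bm f -> mu.-integrable setT (EFin \o f).
Proof.
case=> mf [M hM]; apply: (@le_integrable _ _ _ mu setT measurableT _ (EFin \o cst M)).
- exact/measurable_EFinP.
- move=> x _ /=; rewrite lee_fin; exact: le_trans (hM x) (ler_norm M).
- exact: finite_measure_integrable_cst.
Qed.

Lemma RIntE f : bm f -> (\int[mu]_(x in setT) (f x)%:E)%E = (RInt mu f)%:E.
Proof. by move=> bf; rewrite /RInt fineK //; apply: integrable_fin_num => //; exact: bm_integrable. Qed.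

Lemma bm_cst c : bm (fun _ => c).
Proof. by split; [exact: measurable_cst | exists `|c|]. Qed.

Lemma bmD f g : bm f -> bm g -> bm (fun x => f x + g x).
Proof.
case=> mf [M hM] [mg [N hN]]; split; first exact: measurable_funD.
by exists (M + N) => x; apply: le_trans (ler_normD _ _) _; apply: lerD.
Qed.

Lemma bmZ c f : bm f -> bm (fun x => c * f x).
Proof.
case=> mf [M hM]; split; first exact: measurable_funM (measurable_cst _) mf.
by exists (`|c| * M) => x; rewrite normrM ler_wpM2l.
Qed.

Lemma bmN f : bm f -> bm (fun x => - f x).
Proof.
move=> bf; have := @bmZ (-1) f bf.
by rewrite (_ : (fun x => -1 * f x) = (fun x => - f x)) //; apply/funext => x; rewrite mulN1r.
Qed.

Lemma bm_sum I (s : seq I) (F : I -> T -> R) : (forall i, bm (F i)) ->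
  bm (fun x => \sum_(i <- s) F i x).
Proof.
move=> bF; elim: s => [|i s ih].
  by under eq_fun do rewrite big_nil; exact: bm_cst.
by under eq_fun do rewrite big_cons; exact: bmD.
Qed.

Lemma RInt_ext f g : f =1 g -> RInt mu f = RInt mu g.
Proof. by move=> /funext ->. Qed.

Lemma RIntD f g : bm f -> bm g -> RInt mu (fun x => f x + g x) = RInt mu f + RInt mu g.
Proof.
move=> bf bg; apply: EFin_inj; rewrite -RIntE; last exact: bmD.
under eq_integral do rewrite EFinD.
rewrite integralD //; [|exact: bm_integrable|exact: bm_integrable].
by rewrite !RIntE.
Qed.

Lemma RIntZ c f : bm f -> RInt mu (fun x => c * f x) = c * RInt mu f.
Proof.
move=> bf; apply: EFin_inj; rewrite -RIntE; last exact: bmZ.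
under eq_integral do rewrite EFinM.
by rewrite integralZl //; [rewrite RIntE|exact: bm_integrable].
Qed.

Lemma RIntN f : bm f -> RInt mu (fun x => - f x) = - RInt mu f.
Proof.
move=> bf; rewrite -mulN1r -RIntZ //; apply: RInt_ext => x; by rewrite mulN1r.
Qed.

Lemma RIntB f g : bm f -> bm g -> RInt mu (fun x => f x - g x) = RInt mu f - RInt mu g.
Proof. by move=> bf bg; rewrite RIntD ?RIntN //; exact: bmN. Qed.

Lemma RInt_cst c : RInt mu (fun _ => c) = c.
Proof. rewrite /RInt integral_cst //= (_ : mu [set: T] = 1%E) ?mule1 //; exact: probability_setT. Qed.

Lemma RInt_ge0 f : (forall x, 0 <= f x) -> 0 <= RInt mu f.
Proof. by move=> f0; apply: fine_ge0; apply: integral_ge0 => x _; rewrite lee_fin. Qed.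

Lemma RInt_sum I (s : seq I) (F : I -> T -> R) : (forall i, bm (F i)) ->
  RInt mu (fun x => \sum_(i <- s) F i x) = \sum_(i <- s) RInt mu (F i).
Proof.
move=> bF; elim: s => [|i s ih].
  by under eq_fun do rewrite big_nil; rewrite big_nil RInt_cst.
under eq_fun do rewrite big_cons; rewrite big_cons RIntD ?ih //; exact: bm_sum.
Qed.

Lemma RInt_le f g : bm f -> bm g -> (forall x, f x <= g x) -> RInt mu f <= RInt mu g.
Proof.
move=> bf bg fg; rewrite -subr_ge0 -RIntB //; apply: RInt_ge0 => x.
by rewrite subr_ge0.
Qed.

Lemma RInt_abs_le f M : bm f -> (forall x, `|f x| <= M) -> `|RInt mu f| <= M.
Proof.
move=> bf hM; rewrite ler_norml; apply/andP; split.
  rewrite -[X in X <= _](RInt_cst (- M)); apply: RInt_le => //; first exact: bm_cst.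
  by move=> x; have := hM x; rewrite ler_norml => /andP[].
rewrite -[X in _ <= X](RInt_cst M); apply: RInt_le => //; first exact: bm_cst.
by move=> x; have := hM x; rewrite ler_norml => /andP[].
Qed.

End RIntLemmas.

Section Kern.
Context (R : realType) (q : nat) (k : Rq R q -> Rq R q -> R).
Hypotheses (kmeas : kernel_measurable k) (ksym : kernel_symmetric k)
  (kpd : kernel_posdef k) (kb : forall u, `|k u u| <= 1).
Local Notation X := (Rq R q).

Lemma k_bound x y : `|k x y| <= 1.
Proof.
have h s := @kpd 2 (fun i => if val i == 0%N then x else y)
   (fun i => if val i == 0%N then 1 else s).
have h1 := h 1; have h2 := h (-1).
rewrite !big_ord_recl !big_ord0 /= in h1 h2.
have := kb x; have := kb y; rewrite (ksym y x) in h1 h2.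
rewrite !ler_norml => /andP[_ ?] /andP[_ ?]; apply/andP; split; nra.
Qed.

Lemma mk1 x : measurable_fun setT (k x).
Proof. exact: (measurableT_comp kmeas (pair1_measurable x)). Qed.

Lemma mk2 y : measurable_fun setT (fun x => k x y).
Proof. have -> : (fun x => k x y) = k y by apply: boolp.funext => x; rewrite ksym.
exact: mk1. Qed.

Lemma mkdiag : measurable_fun setT (fun y => k y y).
Proof.
have -> : (fun y => k y y) = (fun p => k p.1 p.2) \o (fun y : X => (y, y)) by [].
apply: measurableT_comp kmeas _.
by apply: (@measurable_fun_pair _ _ _ _ _ _ (fun y : X => y) (fun y : X => y)).
Qed.

Lemma bmk1 x : bm (k x).
Proof. by split; [exact: mk1| exists 1; exact: k_bound]. Qed.
Lemma bmk2 y : bm (fun x => k x y).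
Proof. by split; [exact: mk2| exists 1 => x; exact: k_bound]. Qed.
Lemma bmdiag : bm (fun y => k y y).
Proof. by split; [exact: mkdiag| exists 1 => x; exact: k_bound]. Qed.

Let kp (p : X * X) : \bar R := (k p.1 p.2 + 1)%:E.
Let mkp : measurable_fun setT kp.
Proof. by apply/measurable_EFinP; apply: measurable_funD => //; exact: measurable_cst. Qed.
Let kp0 p : (0 <= kp p)%E.
Proof. by rewrite lee_fin -lerBlDr sub0r; have := k_bound p.1 p.2; rewrite ler_norml => /andP[]. Qed.

Lemma int_kp (mu : probability X R) x :
  (\int[mu]_y kp (x, y))%E = (RInt mu (k x) + 1)%:E.
Proof. by rewrite /kp /= RIntE ?RIntD ?RInt_cst //; [exact: bmk1|exact: bm_cst|apply: bmD; [exact: bmk1|exact: bm_cst]]. Qed.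

Lemma mRk (mu : probability X R) : measurable_fun setT (fun x => RInt mu (k x)).
Proof.
have mF := measurable_fun_fubini_tonelli_F (m2 := (mu : {sigma_finite_measure set X -> \bar R})) kp mkp kp0.
have -> : (fun x => RInt mu (k x)) = (fun x => fine (fubini_F (mu : {sigma_finite_measure set X -> \bar R}) kp x) - 1).
  by apply/funext => x; rewrite /fubini_F int_kp /= addrK.
by apply: measurable_funB; [exact: measurableT_comp mF|exact: measurable_cst].
Qed.

Lemma bmRk (mu : probability X R) : bm (fun x => RInt mu (k x)).
Proof. by split; [exact: mRk| exists 1 => x; apply: RInt_abs_le; [exact: bmk1|exact: k_bound]]. Qed.

Definition G (mu nu : probability X R) := RInt mu (fun x => RInt nu (k x)).

Lemma G_sym mu nu : G mu nu = G nu mu.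
Proof.
have := fubini_tonelli (m1 := (mu : {sigma_finite_measure set X -> \bar R}))
  (m2 := (nu : {sigma_finite_measure set X -> \bar R})) kp mkp kp0.
under eq_integral do rewrite int_kp.
have kps : forall y, (fun x => kp (x, y)) = (fun x => kp (y, x)).
  by move=> y; apply/funext => x; rewrite /kp /= ksym.
under [X in _ = X]eq_integral do rewrite kps int_kp.
rewrite !RIntE; first last.
- by apply: bmD; [exact: bmRk|exact: bm_cst].
- by apply: bmD; [exact: bmRk|exact: bm_cst].
rewrite !RIntD; [|exact: bmRk|exact: bm_cst|exact: bmRk|exact: bm_cst].
rewrite !RInt_cst /G => h; have := EFin_inj h; lra.
Qed.


Lemma sum_cst_seq (I : Type) (s : seq I) (c : R) : \sum_(i <- s) c = c * (size s)%:R.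
Proof. elim: s => [|i s ih]; first by rewrite big_nil mulr0. by rewrite big_cons ih /= -addn1 natrD; ring. Qed.

Definition Qs (s : seq (R * X)) := \sum_(p <- s) \sum_(p' <- s) p.1 * p'.1 * k p.2 p'.2.

Lemma Qs_ge0 s : 0 <= Qs s.
Proof.
rewrite /Qs (big_nth (0, point)) big_mkord.
under eq_bigr do rewrite (big_nth (0, point)) big_mkord.
exact: (@kpd (size s) (fun i => (nth (0, point) s i).2) (fun i => (nth (0, point) s i).1)).
Qed.

Lemma Qs_cons a y s : Qs ((a, y) :: s) =
  Qs s + 2 * a * (\sum_(p <- s) p.1 * k p.2 y) + a ^+ 2 * k y y.
Proof.
rewrite /Qs big_cons big_cons /=.
under [X in _ + X = _]eq_bigr => p _ do rewrite big_cons.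
rewrite big_split /=.
have e1 : \sum_(p' <- s) a * p'.1 * k y p'.2 = a * \sum_(p <- s) p.1 * k p.2 y.
  by rewrite mulr_sumr; apply: eq_bigr => p _; rewrite ksym mulrA.
have e2 : \sum_(p <- s) p.1 * a * k p.2 y = a * \sum_(p <- s) p.1 * k p.2 y.
  by rewrite mulr_sumr; apply: eq_bigr => p _; rewrite [p.1 * a]mulrC mulrA.
rewrite e1 e2; ring.
Qed.

Definition Bil (L1 L2 : seq (R * probability X R)) :=
  \sum_(p <- L1) \sum_(p' <- L2) p.1 * p'.1 * G p.2 p'.2.

Section PSD.
Variable L : seq (R * probability X R).
Let n := (size L)%:R : R.
Let mm x := n^-1 * \sum_(p <- L) p.1 * RInt p.2 (k x).
Let A := n^-1 * \sum_(p <- L) p.1 ^+ 2 * RInt p.2 (fun y => k y y).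
Let B := n^-1 * \sum_(p <- L) p.1 * RInt p.2 mm.
Let F (N : nat) s := Qs s + 2 * N%:R * (\sum_(p <- s) p.1 * mm p.2) + N%:R * A
   + N%:R * (N%:R - 1) * B.

Let bmm : bm mm.
Proof. apply: bmZ; apply: bm_sum => p; apply: bmZ; exact: bmRk. Qed.

Let nL : (0 < size L)%N -> n != 0.
Proof. by move=> h; rewrite pnatr_eq0 -lt0n. Qed.

Let Fstep N s : (0 < size L)%N ->
  F N.+1 s = n^-1 * \sum_(p <- L) RInt p.2 (fun y => F N ((p.1, y) :: s)).
Proof.
move=> L0.
have hR : forall (p : R * probability X R), RInt p.2 (fun y => F N ((p.1, y) :: s)) =
   (Qs s + 2 * N%:R * (\sum_(p <- s) p.1 * mm p.2) + N%:R * A + N%:R * (N%:R - 1) * B)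
   + 2 * p.1 * (\sum_(p' <- s) p'.1 * RInt p.2 (k p'.2))
   + p.1 ^+ 2 * RInt p.2 (fun y => k y y) + 2 * N%:R * p.1 * RInt p.2 mm.
  move=> [a mu] /=.
  have -> : (fun y => F N ((a, y) :: s)) = (fun y =>
     ((Qs s + 2 * N%:R * (\sum_(p <- s) p.1 * mm p.2) + N%:R * A + N%:R * (N%:R - 1) * B)
     + (2 * a) * (\sum_(p' <- s) p'.1 * k p'.2 y)) + a ^+ 2 * k y y + (2 * N%:R * a) * mm y).
    apply: boolp.funext => y; rewrite /F Qs_cons big_cons /=; ring.
  have bS : bm (fun y => \sum_(p' <- s) p'.1 * k p'.2 y).
    by apply: bm_sum => p; apply: bmZ; exact: bmk1.
  rewrite RIntD; [|apply: bmD; [apply: bmD; [exact: bm_cst|exact: bmZ]|apply: bmZ; exact: bmdiag]|exact: bmZ].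
  rewrite RIntD; [|apply: bmD; [exact: bm_cst|exact: bmZ]|apply: bmZ; exact: bmdiag].
  rewrite RIntD; [|exact: bm_cst|exact: bmZ].
  rewrite RInt_cst (RIntZ _ _ bS) (RIntZ _ _ bmdiag) (RIntZ _ _ bmm).
  rewrite RInt_sum; last by move=> p; apply: bmZ; exact: bmk1.
  by congr (_ + _ + _ + _); congr (_ * _); apply: eq_bigr => p _; rewrite RIntZ //; exact: bmk1.
under eq_bigr do rewrite hR.
rewrite !big_split /= !sum_cst_seq -/n.
have e1 : \sum_(i <- L) 2 * i.1 * (\sum_(p' <- s) p'.1 * RInt i.2 (k p'.2)) =
   2 * n * \sum_(p <- s) p.1 * mm p.2.
  transitivity (\sum_(i <- L) \sum_(p <- s) 2 * i.1 * p.1 * RInt i.2 (k p.2)).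
    by apply: eq_bigr => i _; rewrite !mulr_sumr; apply: eq_bigr => p _; ring.
  rewrite exchange_big /= /mm mulr_sumr; apply: eq_bigr => p _.
  rewrite !mulr_sumr; apply: eq_bigr => i _.
  have nn := nL L0; field => //.
have e2 : \sum_(i <- L) i.1 ^+ 2 * RInt i.2 (fun y => k y y) = n * A.
  by rewrite /A; have nn := nL L0; field.
have e3 : \sum_(i <- L) 2 * N%:R * i.1 * RInt i.2 mm = 2 * N%:R * (n * B).
  have nn := nL L0; rewrite /B (mulrA n) mulfV // mul1r.
  by rewrite mulr_sumr; apply: eq_bigr => p _; ring.
rewrite e1 e2 e3 /F.
have nn := nL L0.
rewrite -!natr1.
field => //.
Qed.

Let Fge0 N s : (0 < size L)%N -> 0 <= F N s.
Proof.
move=> L0; elim: N s => [|N ih] s.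
  by rewrite /F /= !mul0r !mulr0 !addr0 mul0r addr0; exact: Qs_ge0.
rewrite Fstep //; apply: mulr_ge0; first by rewrite invr_ge0 ler0n.
by apply: sumr_ge0 => p _; apply: RInt_ge0 => y; exact: ih.
Qed.

Lemma Bil_ge0 : 0 <= Bil L L.
Proof.
have [L0|L0] := posnP (size L).
  by move/size0nil: L0 => ->; rewrite /Bil big_nil.
have nn := nL L0.
have hB : Bil L L = n * n * B.
  rewrite /B /Bil mulrA mulfK // mulr_sumr; apply: eq_bigr => p _.
  rewrite /mm (RIntZ _ _ _); last by apply: bm_sum => i; apply: bmZ; exact: bmRk.
  rewrite RInt_sum; last by move=> i; apply: bmZ; exact: bmRk.
  rewrite !mulr_sumr; apply: eq_bigr => p' _.
  rewrite RIntZ; last exact: bmRk.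
  by rewrite /G; field; exact: nn.
rewrite hB; apply: mulr_ge0; first by apply: mulr_ge0; rewrite ler0n.
have hF N : 0 <= N%:R * (A + (N%:R - 1) * B).
  have := Fge0 N [::] L0; rewrite /F /Qs !big_nil; lra.
rewrite leNgt; apply/negP => Bneg.
pose M := (Num.bound (`|A| / - B)).+2.
have nB : 0 < - B by rewrite oppr_gt0.
have hM := archi_boundP (divr_ge0 (normr_ge0 A) (ltW nB)).
have hA : A <= `|A| := ler_norm A.
have h1 : `|A| < (M%:R - 1) * (- B).
  rewrite -ltr_pdivrMr ?oppr_gt0 //; apply: lt_le_trans hM _.
  by rewrite /M -natr1 -natr1 addrK lerDl.
have := hF M; rewrite pmulr_rge0 ?ltr0n //; nra.
Qed.

End PSD.


Lemma quad_disc (a b c : R) : 0 <= c -> (forall t, 0 <= a + t * b + t ^+ 2 * c) -> b ^+ 2 <= 4 * a * c.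
Proof.
move=> c0 h.
have a0 : 0 <= a by have := h 0; rewrite !expr2; lra.
have [c0'|cpos] := eqVneq c 0.
  case: (eqVneq b 0) => [->|bn]; first by rewrite c0' mulr0 expr2 mulr0.
  have := h (- (a + 1) / b); rewrite c0' mulr0 addr0 divfK //; lra.
have cp : 0 < c by rewrite lt_def cpos c0.
have := h (- b / (2 * c)).
have -> : a + - b / (2 * c) * b + (- b / (2 * c)) ^+ 2 * c = a - b ^+ 2 / (4 * c).
  by field; rewrite cpos.
rewrite subr_ge0 ler_pdivrMr; last by rewrite mulr_gt0.
by rewrite mulrA (mulrC a).
Qed.

Lemma minkowski (a b c : R) : 0 <= a -> 0 <= c -> b ^+ 2 <= 4 * a * c ->
  Num.sqrt (a + b + c) <= Num.sqrt a + Num.sqrt c.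
Proof.
move=> a0 c0 hb.
have sa := sqr_sqrtr a0; have sc := sqr_sqrtr c0.
have sa0 := sqrtr_ge0 a; have sc0 := sqrtr_ge0 c.
have hd : b <= 2 * Num.sqrt a * Num.sqrt c.
  have : b ^+ 2 <= (2 * Num.sqrt a * Num.sqrt c) ^+ 2.
    by rewrite !exprMn sa sc; lra.
  have : 0 <= 2 * Num.sqrt a * Num.sqrt c by rewrite !mulr_ge0.
  nra.
have : a + b + c <= (Num.sqrt a + Num.sqrt c) ^+ 2.
  by rewrite sqrrD sa sc; lra.
move/ler_wsqrtr; rewrite sqrtr_sqr ger0_norm //; exact: addr_ge0.
Qed.

Lemma Bil_catl L1 L2 M : Bil (L1 ++ L2) M = Bil L1 M + Bil L2 M.
Proof. by rewrite /Bil big_cat. Qed.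

Lemma Bil_catr M L1 L2 : Bil M (L1 ++ L2) = Bil M L1 + Bil M L2.
Proof. by rewrite /Bil -big_split; apply: eq_bigr => p _; rewrite big_cat. Qed.

Definition scl (t : R) (L : seq (R * probability X R)) := [seq (t * p.1, p.2) | p <- L].

Lemma Bil_scll t L M : Bil (scl t L) M = t * Bil L M.
Proof.
rewrite /Bil big_map mulr_sumr; apply: eq_bigr => p _.
by rewrite mulr_sumr; apply: eq_bigr => p' _ /=; ring.
Qed.

Lemma Bil_sclr t M L : Bil M (scl t L) = t * Bil M L.
Proof.
rewrite /Bil mulr_sumr; apply: eq_bigr => p _.
by rewrite big_map mulr_sumr; apply: eq_bigr => p' _ /=; ring.
Qed.

Lemma Bil_mink L M : Num.sqrt (Bil (L ++ M) (L ++ M)) <=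
  Num.sqrt (Bil L L) + Num.sqrt (Bil M M).
Proof.
rewrite Bil_catl !Bil_catr.
have -> : Bil L L + Bil L M + (Bil M L + Bil M M) =
  Bil L L + (Bil L M + Bil M L) + Bil M M by ring.
apply: minkowski; [exact: Bil_ge0|exact: Bil_ge0|].
apply: quad_disc; first exact: Bil_ge0.
move=> t.
have := Bil_ge0 (L ++ scl t M).
rewrite Bil_catl !Bil_catr !Bil_scll !Bil_sclr.
move=> h; have -> : Bil L L + t * (Bil L M + Bil M L) + t ^+ 2 * Bil M M =
  Bil L L + t * Bil L M + (t * Bil M L + t * (t * Bil M M)) by ring.
exact: h.
Qed.

End Kern.

Section Emp.
Context (R : realType) (q : nat) (dO : measure_display) (Omega : measurableType dO)
  (y : int -> Omega -> Rq R q).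
Local Notation X := (Rq R q).

Lemma RInt_emp (T : nat) w (f : X -> R) : (0 < T)%N -> measurable_fun setT f ->
  RInt (empirical y T w) f = T%:R^-1 * \sum_(t < T) f (y (t.+1)%:Z w).
Proof.
move=> T0 mf.
set a := fun t : nat => y (t.+1)%:Z w.
have hT : 0 <= T%:R^-1 :> R by rewrite invr_ge0 ler0n.
pose r : {nonneg R} := NngNum hT.
pose m := mscale r (msum (fun t => \d_(a t)) T).
have Em : empirical y T w = m.
  apply: boolp.funext => A; rewrite /empirical /m /mscale /msum /=.
  rewrite EFinM /msum -sumEFin; congr (_ * _)%E; apply: eq_bigr => t _.

have ge (g : X -> R) : measurable_fun setT g -> (forall x, 0 <= g x) ->
    (\int[m]_x (g x)%:E = (T%:R^-1 * \sum_(t < T) g (a t))%:E)%E.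
  move=> mg g0.
  have mg' : measurable_fun setT (EFin \o g) by exact/measurable_EFinP.
  rewrite ge0_integral_mscale //; last by move=> x _; rewrite lee_fin.
  rewrite ge0_integral_measure_sum //; last by move=> x _; rewrite lee_fin.
  rewrite EFinM -sumEFin; congr (_ * _)%E; apply: eq_bigr => t _.
  by rewrite integral_dirac // diracT mul1e.
rewrite /RInt Em integralE funerpos funerneg /=.
rewrite (ge (f^\+)); [|exact: measurable_funrpos|exact: funrpos_ge0].
rewrite (ge (f^\-)); [|exact: measurable_funrneg|exact: funrneg_ge0].
rewrite -EFinB /= -mulrBr -sumrB; congr (_ * _); apply: eq_bigr => t _.
by have := congr1 (fun g => g (a t)) (funrposBneg f).
Qed.

Lemma RInt_dirac (a : X) (f : X -> R) : measurable_fun setT f -> RInt \d_a f = f a.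
Proof.
move=> mf; rewrite /RInt integral_dirac //; last exact/measurable_EFinP.
by rewrite diracT mul1e.
Qed.

End Emp.

Lemma RInt_extg d (T : measurableType d) (R : realType) (mu : set T -> \bar R) (f g : T -> R) :
  f =1 g -> RInt mu f = RInt mu g.
Proof. by move=> /boolp.funext ->. Qed.

Section Tri.
Context (R : realType) (q : nat) (k : Rq R q -> Rq R q -> R).
Hypotheses (kmeas : kernel_measurable k) (ksym : kernel_symmetric k)
  (kpd : kernel_posdef k) (kb : forall u, `|k u u| <= 1).
Context (dO : measure_display) (Omega : measurableType dO) (y : int -> Omega -> Rq R q).
Local Notation X := (Rq R q).
Local Notation Bil := (Bil k).
Local Notation G := (G k).

Definition Ed (T : nat) w : seq (R * probability X R) :=
  [seq (T%:R^-1, (\d_(y (t.+1)%:Z w) : probability X R)) | t <- index_iota 0 T].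

Definition L1 (mu : probability X R) : seq (R * probability X R) := [:: (1, mu)].

Lemma G_dr (mu : probability X R) (a : X) : G mu \d_a = RInt mu (fun x => k x a).
Proof. by rewrite /G; apply: RInt_ext => x; rewrite RInt_dirac //; exact: mk1. Qed.

Lemma G_dl (mu : probability X R) (a : X) : G \d_a mu = RInt mu (fun x => k x a).
Proof.
rewrite /G RInt_dirac; last exact: mRk.
by apply: RInt_ext => x; rewrite ksym.
Qed.

Lemma G_dd (a b : X) : G \d_a \d_b = k a b.
Proof. by rewrite G_dr RInt_dirac //; exact: mk2. Qed.

Lemma Bil_1E (mu : probability X R) T w : Bil (L1 mu) (Ed T w) =
  T%:R^-1 * \sum_(t < T) RInt mu (fun x => k x (y (t.+1)%:Z w)).
Proof.
rewrite /Bil /L1 big_cons big_nil addr0 big_map big_mkord mulr_sumr.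
by apply: eq_bigr => t _ /=; rewrite G_dr mul1r.
Qed.

Lemma Bil_E1 (mu : probability X R) T w : Bil (Ed T w) (L1 mu) =
  T%:R^-1 * \sum_(t < T) RInt mu (fun x => k x (y (t.+1)%:Z w)).
Proof.
rewrite /Bil big_map big_mkord mulr_sumr.
by apply: eq_bigr => t _ /=; rewrite big_cons big_nil addr0 G_dl mulr1.
Qed.

Lemma Bil_EE T w : Bil (Ed T w) (Ed T w) =
  T%:R^-1 * \sum_(s < T) (T%:R^-1 * \sum_(t < T) k (y (s.+1)%:Z w) (y (t.+1)%:Z w)).
Proof.
rewrite /Bil big_map big_mkord mulr_sumr; apply: eq_bigr => s _ /=.
rewrite big_map big_mkord !mulr_sumr; apply: eq_bigr => t _ /=.
by rewrite G_dd mulrA.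
Qed.

Lemma Bil_11 (mu nu : probability X R) : Bil (L1 mu) (L1 nu) = G mu nu.
Proof. by rewrite /Bil /L1 !big_cons !big_nil /= !addr0 !mul1r. Qed.

Lemma MMD2_emp (mu : probability X R) T w : (0 < T)%N ->
  MMD2 k mu (empirical y T w) = Bil (L1 mu ++ scl (-1) (Ed T w)) (L1 mu ++ scl (-1) (Ed T w)).
Proof.
move=> T0.
rewrite !(Bil_catl, Bil_catr, Bil_scll, Bil_sclr) Bil_1E Bil_E1 Bil_EE Bil_11 /MMD2.
have bs : bm (fun z => T%:R^-1 * \sum_(t < T) k z (y (t.+1)%:Z w)).
  by apply: bmZ; apply: bm_sum => t; exact: bmk2.
have e1 : forall x, RInt (empirical y T w) (k x) = T%:R^-1 * \sum_(t < T) k x (y (t.+1)%:Z w).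
  by move=> x; rewrite RInt_emp //; exact: mk1.
have e2 : forall nu : set X -> \bar R, RInt nu (fun x => RInt (empirical y T w) (k x)) =
    RInt nu (fun x => T%:R^-1 * \sum_(t < T) k x (y (t.+1)%:Z w)).
  by move=> nu; apply: RInt_extg => x; exact: e1.
rewrite !e2 RInt_emp //; last by case: bs => mb _; exact: mb.
rewrite RIntZ; last by apply: bm_sum => t; exact: bmk2.
rewrite RInt_sum; last by move=> t; exact: bmk2.
rewrite /G; ring.
Qed.

Lemma MMD2_P (mu nu : probability X R) :
  MMD2 k mu nu = Bil (L1 mu ++ scl (-1) (L1 nu)) (L1 mu ++ scl (-1) (L1 nu)).
Proof.
rewrite !(Bil_catl, Bil_catr, Bil_scll, Bil_sclr) !Bil_11 /MMD2 (G_sym kmeas ksym kpd kb nu mu).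
rewrite /G; ring.
Qed.

Definition Zq (P0 : probability X R) T w := Bil (Ed T w ++ scl (-1) (L1 P0)) (Ed T w ++ scl (-1) (L1 P0)).

Lemma Zq_ge0 P0 T w : 0 <= Zq P0 T w.
Proof. exact: Bil_ge0. Qed.

Lemma Zq_E P0 T w : Zq P0 T w =
  T%:R^-1 * \sum_(s < T) (T%:R^-1 * \sum_(t < T) k (y (s.+1)%:Z w) (y (t.+1)%:Z w))
  - 2 * (T%:R^-1 * \sum_(t < T) RInt P0 (fun x => k x (y (t.+1)%:Z w))) + G P0 P0.
Proof. rewrite /Zq !(Bil_catl, Bil_catr, Bil_scll, Bil_sclr) Bil_1E Bil_E1 Bil_EE Bil_11; ring. Qed.

Lemma tri1 (mu P0 : probability X R) T w : (0 < T)%N ->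
  MMD k mu P0 <= MMD k mu (empirical y T w) + Num.sqrt (Zq P0 T w).
Proof.
move=> T0; rewrite /MMD MMD2_P MMD2_emp //.
have -> : Bil (L1 mu ++ scl (-1) (L1 P0)) (L1 mu ++ scl (-1) (L1 P0)) =
  Bil ((L1 mu ++ scl (-1) (Ed T w)) ++ (Ed T w ++ scl (-1) (L1 P0)))
      ((L1 mu ++ scl (-1) (Ed T w)) ++ (Ed T w ++ scl (-1) (L1 P0))).
  by rewrite !(Bil_catl, Bil_catr, Bil_scll, Bil_sclr); ring.
exact: Bil_mink.
Qed.

Lemma tri2 (mu P0 : probability X R) T w : (0 < T)%N ->
  MMD k mu (empirical y T w) <= MMD k mu P0 + Num.sqrt (Zq P0 T w).
Proof.
move=> T0; rewrite /MMD MMD2_P MMD2_emp //.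
have -> : Zq P0 T w = Bil (L1 P0 ++ scl (-1) (Ed T w)) (L1 P0 ++ scl (-1) (Ed T w)).
  by rewrite /Zq !(Bil_catl, Bil_catr, Bil_scll, Bil_sclr); ring.
have -> : Bil (L1 mu ++ scl (-1) (Ed T w)) (L1 mu ++ scl (-1) (Ed T w)) =
  Bil ((L1 mu ++ scl (-1) (L1 P0)) ++ (L1 P0 ++ scl (-1) (Ed T w)))
      ((L1 mu ++ scl (-1) (L1 P0)) ++ (L1 P0 ++ scl (-1) (Ed T w))).
  by rewrite !(Bil_catl, Bil_catr, Bil_scll, Bil_sclr); ring.
exact: Bil_mink.
Qed.

End Tri.

Section PFW.
Context d1 d2 (T1 : measurableType d1) (T2 : measurableType d2) (R : realType).
Context (P : probability T1 R) (f : T1 -> T2) (mf : measurable_fun setT f).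
Definition pfw of measurable_fun setT f := pushforward P f.
Let pfw0 : pfw mf set0 = 0%E.
Proof. by rewrite /pfw /pushforward preimage_set0 measure0. Qed.
Let pfw_ge0 A : (0 <= pfw mf A)%E.
Proof. exact: measure_ge0. Qed.
Let pfw_sa : semi_sigma_additive (pfw mf).
Proof.
move=> F mF tF mUF; rewrite /pfw /pushforward preimage_bigcup.
apply: measure_semi_sigma_additive.
- by move=> n; rewrite -[X in measurable X]setTI; exact: mf.
- apply/trivIsetP => /= i j _ _ ij; rewrite -preimage_setI.
  by move/trivIsetP : tF => /(_ _ _ _ _ ij) ->//; rewrite preimage_set0.
- by rewrite -preimage_bigcup -[X in measurable X]setTI; exact: mf.
Qed.
HB.instance Definition _ := isMeasure.Build _ _ _ (pfw mf) pfw0 pfw_ge0 pfw_sa.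
Let pfw1 : pfw mf setT = 1%E.
Proof. by rewrite /pfw /pushforward preimage_setT probability_setT. Qed.
HB.instance Definition _ := Measure_isProbability.Build _ _ _ (pfw mf) pfw1.
End PFW.

Lemma bm_comp d1 d2 (T1 : measurableType d1) (T2 : measurableType d2) (R : realType)
  (phi : T1 -> T2) (g : T2 -> R) : measurable_fun setT phi -> bm g -> bm (fun w => g (phi w)).
Proof.
move=> mphi [mg [M hM]]; split; last by exists M.
exact: measurableT_comp mg mphi.
Qed.

Lemma RInt_pf d1 d2 (T1 : measurableType d1) (T2 : measurableType d2) (R : realType)
  (P : probability T1 R) (phi : T1 -> T2) (mphi : measurable_fun setT phi) (g : T2 -> R) :
  bm g -> RInt P (fun w => g (phi w)) = RInt (pfw P mphi) g.
Proof.
move=> bg; rewrite /RInt /pfw integral_pushforward //.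
- by case: bg => mg _; exact/measurable_EFinP.
- rewrite preimage_setT; apply: (bm_integrable P); exact: bm_comp.
Qed.

Lemma prob_prod_unique d1 d2 (T1 : measurableType d1) (T2 : measurableType d2) (R : realType)
  (Q1 Q2 : probability (T1 * T2)%type R) :
  (forall A B, measurable A -> measurable B -> Q1 (A `*` B) = Q2 (A `*` B)) ->
  forall C, measurable C -> Q1 C = Q2 C.
Proof.
move=> h C mC.
pose G := [set A `*` B | A in @measurable _ T1 & B in @measurable _ T2].
apply: (measure_unique G (fun _ => setT)) => //.
- exact: measurable_prod_measurableType.
- move=> _ _ [A1 mA1 [B1 mB1 <-]] [A2 mA2 [B2 mB2 <-]]; rewrite -setXI.
  by exists (A1 `&` A2); [exact: measurableI|exists (B1 `&` B2) => //; exact: measurableI].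
- by move=> _; exists setT => //; exists setT => //; rewrite setXTT.
- by rewrite bigcup_const.
- by move=> _ [A mA [B mB <-]]; exact: h.
- by move=> _; apply: (le_lt_trans (probability_le1 Q1 measurableT)); rewrite ltey.
Qed.

Section Laws.
Context (R : realType) (q : nat) (dO : measure_display) (Omega : measurableType dO)
  (P : probability Omega R) (y : int -> Omega -> Rq R q).
Hypotheses (my : forall t, measurable_fun setT (y t)) (st : strictly_stationary P y).
Local Notation X := (Rq R q).

Lemma law1 t (g : X -> R) : bm g -> RInt P (fun w => g (y t w)) = RInt (pfw P (my 0)) g.
Proof.
move=> bg; rewrite (RInt_pf P (my t)) // /RInt; congr fine.
apply: eq_measure_integral => A mA _.
rewrite /pfw /pushforward.
have := @st 1 (fun _ => 0) t (fun _ => A) (fun _ => mA).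
have e : forall u, [set w | forall i : 'I_1, A (y u w)] = y u @^-1` A.
  by move=> u; apply/seteqP; split => w /=; [move=> /(_ ord0)|move=> ? ?].
by move=> /=; rewrite add0r !e => h; apply/esym; exact: h.
Qed.

Lemma law2 s t h (g : (X * X)%type -> R) : bm g ->
  RInt P (fun w => g (y s w, y t w)) = RInt P (fun w => g (y (s + h) w, y (t + h) w)).
Proof.
move=> bg.
have m1 : measurable_fun setT (fun w => (y s w, y t w)) by exact: measurable_fun_pair.
have m2 : measurable_fun setT (fun w => (y (s + h) w, y (t + h) w)) by exact: measurable_fun_pair.
rewrite (RInt_pf P m1) // (RInt_pf P m2) // /RInt; congr fine.
apply: eq_measure_integral => C mC _; apply: prob_prod_unique => // A B mA mB.
rewrite /pfw /pushforward.
pose ts : 'I_2 -> int := fun i => if val i == 0%N then s else t.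
pose Bs : 'I_2 -> set X := fun i => if val i == 0%N then A else B.
have mBs : forall i, measurable (Bs i) by move=> i; rewrite /Bs; case: ifP.
have := @st 2 ts h Bs mBs.
have e1 : [set w | forall i, Bs i (y (ts i) w)] = (fun w => (y s w, y t w)) @^-1` (A `*` B).
  apply/seteqP; split => w /=.
  - by move=> H; split; [exact: (H ord0)|exact: (H (lift ord0 ord0))].
  - by move=> [hA hB] i; rewrite /Bs /ts; case: ifP.
have e2 : [set w | forall i, Bs i (y (ts i + h) w)] =
    (fun w => (y (s + h) w, y (t + h) w)) @^-1` (A `*` B).
  apply/seteqP; split => w /=.
  - by move=> H; split; [exact: (H ord0)|exact: (H (lift ord0 ord0))].
  - by move=> [hA hB] i; rewrite /Bs /ts; case: ifP.
by rewrite e1 e2.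
Qed.

End Laws.

Section Comb.
Context (R : realType).

Lemma rev_sum (f : nat -> R) s : \sum_(t < s) f (s - t)%N = \sum_(h < s) f h.+1.
Proof.
elim: s => [|s ih]; first by rewrite !big_ord0.
rewrite big_ord_recl big_ord_recr /= subn0.
under eq_bigr => i _ do rewrite /bump /= add1n subSS.
by rewrite ih addrC.
Qed.

Lemma dsum_bound (a : nat -> nat -> R) (f : nat -> R) :
  (forall s t, a s t = a t s) -> (forall s, a s s <= 2) ->
  (forall s t, (t < s)%N -> a s t <= f (s - t)%N) -> (forall h, 0 <= f h) ->
  forall T, \sum_(s < T) \sum_(t < T) a s t <= 2 * T%:R + 2 * T%:R * \sum_(h < T) f h.+1.
Proof.
move=> sym diag off f0; elim => [|T ih]; first by rewrite !big_ord0 mulr0 mul0r addr0.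
rewrite big_ord_recr /=.
under eq_bigr => s _ do rewrite big_ord_recr /=.
rewrite big_split /= big_ord_recr /= big_ord_recr /=.
have h1 : \sum_(s < T) a s T <= \sum_(h < T) f h.+1.
  rewrite -rev_sum; apply: ler_sum => s _; rewrite sym; apply: off; exact: ltn_ord.
have h2 : \sum_(s < T) a T s <= \sum_(h < T) f h.+1.
  rewrite -rev_sum; apply: ler_sum => s _; apply: off; exact: ltn_ord.
have h3 := diag T.
have S0 : 0 <= \sum_(h < T) f h.+1 by apply: sumr_ge0 => h _.
have fT := f0 T.+1.
have hT : 0 <= T%:R :> R by rewrite ler0n.
rewrite -natr1; nra.
Qed.

End Comb.

Section Expect.
Context (R : realType) (q : nat) (k : Rq R q -> Rq R q -> R).
Hypotheses (kmeas : kernel_measurable k) (ksym : kernel_symmetric k)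
  (kpd : kernel_posdef k) (kb : forall u, `|k u u| <= 1).
Context (dO : measure_display) (Omega : measurableType dO) (P : probability Omega R)
  (y : int -> Omega -> Rq R q).
Hypotheses (my : forall t, measurable_fun setT (y t)) (st : strictly_stationary P y).
Local Notation X := (Rq R q).
Let P0 := pfw P (my 0).
Let M := G k P0 P0.
Let Ek s t := RInt P (fun w => k (y s w) (y t w)).

Let bm_m0 : bm (fun a => RInt P0 (k a)).
Proof. exact: bmRk. Qed.

Let bm_m0' : bm (fun a => RInt P0 (fun x => k x a)).
Proof.
have -> : (fun a => RInt P0 (fun x => k x a)) = (fun a => RInt P0 (k a)).
  by apply: boolp.funext => a; apply: RInt_ext => x; rewrite ksym.
exact: bm_m0.
Qed.

Let Em0 t : RInt P (fun w => RInt P0 (k (y t w))) = M.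
Proof. by rewrite (law1 my st t bm_m0). Qed.

Let Em0' t : RInt P (fun w => RInt P0 (fun x => k x (y t w))) = M.
Proof.
rewrite -(Em0 t); apply: RInt_ext => w; apply: RInt_ext => x; by rewrite ksym.
Qed.

Let bm_kk : bm (fun p : (X * X)%type => k p.1 p.2).
Proof. by split; [exact: kmeas|exists 1 => p; exact: k_bound]. Qed.

Let bm_kst s t : bm (fun w => k (y s w) (y t w)).
Proof.
have := @bm_comp _ _ _ _ _ (fun w => (y s w, y t w)) _ (measurable_fun_pair (my s) (my t)) bm_kk.
by [].
Qed.

Let bm_m0y t : bm (fun w => RInt P0 (fun x => k x (y t w))).
Proof. exact: (bm_comp (my t) bm_m0'). Qed.

Lemma rhoE t : rho P y k t = `|Ek t 0 - M|.
Proof.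
rewrite /rho /=.
have b1 := bm_comp (my t) bm_m0; have b2 := bm_comp (my 0) bm_m0.
rewrite RIntD; last exact: bm_cst.
  rewrite RIntB; [|apply: bmD; [exact: bm_kst|exact: bmN]|exact: b2].
  rewrite RIntB; [|exact: bm_kst|exact: b1].
  rewrite RInt_cst (law1 my st t bm_m0) (law1 my st 0 bm_m0).
  by congr (`| _ |); rewrite /Ek /M /G; ring.
apply: bmD; [apply: bmD; [exact: bm_kst|exact: bmN]|exact: bmN].
Qed.

Lemma Ek_shift s t : (t < s)%N -> Ek (s.+1)%:Z (t.+1)%:Z = Ek (s - t)%N%:Z 0.
Proof.
move=> ts.
have := law2 my st (s.+1)%:Z (t.+1)%:Z (- (t.+1)%:Z) bm_kk.
rewrite /Ek /= subrr => ->.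
rewrite (_ : (s.+1)%:Z - (t.+1)%:Z = (s - t)%N%:Z) //.
by rewrite subzn // ltnS ltnW.
Qed.

Lemma Ek_sym s t : Ek s t = Ek t s.
Proof. by rewrite /Ek; apply: RInt_ext => w; rewrite ksym. Qed.

Lemma Ek_bound s t : `|Ek s t| <= 1.
Proof. apply: RInt_abs_le; [exact: bm_kst|move=> w; exact: k_bound]. Qed.

Lemma M_bound : `|M| <= 1.
Proof. apply: RInt_abs_le; [exact: bmRk|move=> x; apply: RInt_abs_le; [exact: bmk1|exact: k_bound]]. Qed.

Lemma bmZq T : bm (Zq k y P0 T).
Proof.
have -> : Zq k y P0 T = (fun w =>
  T%:R^-1 * \sum_(s < T) (T%:R^-1 * \sum_(t < T) k (y (s.+1)%:Z w) (y (t.+1)%:Z w))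
  - 2 * (T%:R^-1 * \sum_(t < T) RInt P0 (fun x => k x (y (t.+1)%:Z w))) + G k P0 P0).
  by apply: boolp.funext => w; rewrite Zq_E.
apply: bmD; last exact: bm_cst.
apply: bmD; last (apply: bmN; apply: bmZ; apply: bmZ; apply: bm_sum => t; exact: bm_m0y).
apply: bmZ; apply: bm_sum => s; apply: bmZ; apply: bm_sum => t; exact: bm_kst.
Qed.

Lemma EZ T : (0 < T)%N -> RInt P (Zq k y P0 T) =
  T%:R^-1 * \sum_(s < T) (T%:R^-1 * \sum_(t < T) (Ek (s.+1)%:Z (t.+1)%:Z - M)).
Proof.
move=> T0.
have -> : Zq k y P0 T = (fun w =>
  T%:R^-1 * \sum_(s < T) (T%:R^-1 * \sum_(t < T) k (y (s.+1)%:Z w) (y (t.+1)%:Z w))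
  + - (2 * (T%:R^-1 * \sum_(t < T) RInt P0 (fun x => k x (y (t.+1)%:Z w)))) + G k P0 P0).
  by apply: boolp.funext => w; rewrite Zq_E.
have bA : bm (fun w => T%:R^-1 * \sum_(s < T) (T%:R^-1 * \sum_(t < T) k (y (s.+1)%:Z w) (y (t.+1)%:Z w))).
  apply: bmZ; apply: bm_sum => s; apply: bmZ; apply: bm_sum => t; exact: bm_kst.
have bB : bm (fun w => 2 * (T%:R^-1 * \sum_(t < T) RInt P0 (fun x => k x (y (t.+1)%:Z w)))).
  apply: bmZ; apply: bmZ; apply: bm_sum => t; exact: bm_m0y.
rewrite RIntD; [|apply: bmD => //; exact: bmN|exact: bm_cst].
rewrite RIntD //; last exact: bmN.
rewrite RIntN // RInt_cst RIntZ; last by apply: bm_sum => s; apply: bmZ; apply: bm_sum => t; exact: bm_kst.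
rewrite RInt_sum; last by move=> s; apply: bmZ; apply: bm_sum => t; exact: bm_kst.
rewrite RIntZ; last by apply: bmZ; apply: bm_sum => t; exact: bm_m0y.
rewrite RIntZ; last by apply: bm_sum => t; exact: bm_m0y.
rewrite RInt_sum; last by move=> t; exact: bm_m0y.
have eS : forall s : nat, RInt P (fun w => T%:R^-1 * \sum_(t < T) k (y (s.+1)%:Z w) (y (t.+1)%:Z w))
    = T%:R^-1 * \sum_(t < T) Ek (s.+1)%:Z (t.+1)%:Z.
  move=> s; rewrite RIntZ; last by apply: bm_sum => t; exact: bm_kst.
  by rewrite RInt_sum //; move=> t; exact: bm_kst.
under eq_bigr => s _ do rewrite eS.
have eM : \sum_(i < T) RInt P (fun w => RInt P0 (fun x => k x (y (i.+1)%:Z w))) = \sum_(i < T) M.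
  by apply: eq_bigr => i _; exact: Em0'.
rewrite eM.
have hT : T%:R != 0 :> R by rewrite pnatr_eq0 -lt0n.
have eR : forall s : nat, T%:R^-1 * \sum_(t < T) (Ek (s.+1)%:Z (t.+1)%:Z - M) =
    T%:R^-1 * \sum_(t < T) Ek (s.+1)%:Z (t.+1)%:Z - M.
  move=> s; rewrite sumrB sumr_const card_ord -mulr_natr; field; exact: hT.
rewrite [in RHS](eq_bigr _ (fun (s : 'I_T) _ => eR s)) sumrB sumr_const card_ord.
rewrite -[M *+ T]mulr_natr /M.
field; exact: hT.
Qed.

Lemma EZ_bound T : (0 < T)%N ->
  RInt P (Zq k y P0 T) <= 2 / T%:R + 2 * (Sigma P y k T / T%:R).
Proof.
move=> T0; rewrite EZ //.
pose a := fun s t : nat => `|Ek (s.+1)%:Z (t.+1)%:Z - M|.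
have hT : 0 < T%:R :> R by rewrite ltr0n.
have hTi : 0 <= T%:R^-1 :> R by rewrite invr_ge0 ltW.
have step : T%:R^-1 * \sum_(s < T) (T%:R^-1 * \sum_(t < T) (Ek (s.+1)%:Z (t.+1)%:Z - M))
    <= T%:R^-1 * (T%:R^-1 * \sum_(s < T) \sum_(t < T) a s t).
  rewrite [X in _ <= _ * X]mulr_sumr; apply: ler_wpM2l => //; apply: ler_sum => s _.
  apply: ler_wpM2l => //; apply: ler_sum => t _; exact: ler_norm.
apply: le_trans step _.
have hb := @dsum_bound R a (fun h => rho P y k h%:Z).
have H' : \sum_(s < T) \sum_(t < T) a s t <= 2 * T%:R + 2 * T%:R * Sigma P y k T.
  apply: hb.
  - by move=> s t; rewrite /a Ek_sym.
  - move=> s; rewrite /a; apply: le_trans (ler_normB _ _) _.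
    by have := Ek_bound (s.+1)%:Z (s.+1)%:Z; have := M_bound; lra.
  - by move=> s t ts; rewrite /a Ek_shift // rhoE.
  - by move=> h; rewrite /rho normr_ge0.
have e : 2 / T%:R + 2 * (Sigma P y k T / T%:R) =
    T%:R^-1 * (T%:R^-1 * (2 * T%:R + 2 * T%:R * Sigma P y k T)).
  by field; rewrite lt0r_neq0.
rewrite e; apply: ler_wpM2l => //; apply: ler_wpM2l => //.
Qed.

End Expect.

Lemma aux_tri (R : realType) (a b c e s g : R) :
  a + g <= b -> b <= c + s -> c <= e -> e <= a + s -> g / 2 <= s.
Proof. lra. Qed.

Lemma aux_T (R : realType) (x T : R) : 0 < x -> 4 / x < T -> 2 / T <= x / 2.
Proof.
move=> x0 h; rewrite ltr_pdivrMr // in h.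
have T0 : 0 < T by nra.
rewrite ler_pdivrMr //; nra.
Qed.

Lemma aux_fin (R : realType) (c p E a S delta : R) : 0 < c ->
  c * p <= E -> E <= a + 2 * S -> a <= c * delta / 2 -> `|S| < c * delta / 4 -> p <= delta.
Proof.
move=> c0 h1 h2 h3 h4; have := ler_norm S; move=> h5.
have : c * p <= c * delta by lra.
by rewrite ler_pM2l.
Qed.

Unset Implicit Arguments.

Theorem proposition3 (R : realType) (q d : nat)
  (dO : measure_display) (Omega : measurableType dO) (P : probability Omega R)
  (y : int -> Omega -> Rq R q)
  (k : Rq R q -> Rq R q -> R)
  (Theta : set 'rV[R]_d) (Pth : 'rV[R]_d -> probability (Rq R q) R)
  (theta_hat : nat -> Omega -> 'rV[R]_d) (theta_star : 'rV[R]_d) :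
  (forall t, measurable_fun [set: Omega] (y t)) ->
  strictly_stationary P y ->
  kernel_measurable k -> kernel_symmetric k -> kernel_posdef k ->
  kernel_characteristic k ->
  (forall u, `| k u u | <= 1) ->
  (* theta_hat T is a minimizer of theta |-> D(P_theta, P_T) over Theta *)
  (forall (T : nat) w, (0 < T)%N ->
     Theta (theta_hat T w) /\
     forall th, Theta th ->
       MMD k (Pth (theta_hat T w)) (empirical y T w) <= MMD k (Pth th) (empirical y T w)) ->
  (* Sigma_T = o(T) *)
  (fun T : nat => Sigma P y k T / T%:R) @ \oo --> (0 : R) ->
  (* (i) theta_star is the unique minimizer of theta |-> D(P_theta, P0) *)
  Theta theta_star ->
  (forall th, Theta th ->
     MMD k (Pth theta_star) (pushforward P (y 0)) <= MMD k (Pth th) (pushforward P (y 0))) ->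
  (forall th, Theta th ->
     (forall th', Theta th' ->
        MMD k (Pth th) (pushforward P (y 0)) <= MMD k (Pth th') (pushforward P (y 0))) ->
     th = theta_star) ->
  (* (ii) well-separated minimum *)
  (forall r : R, 0 < r ->
     ((MMD k (Pth theta_star) (pushforward P (y 0)))%:E <
     ereal_inf [set (MMD k (Pth th) (pushforward P (y 0)))%:E
               | th in [set th | Theta th /\ (r <= `| th - theta_star |)%R]])%E) ->
  (* conclusion: theta_hat_T -> theta_star in (outer) probability *)
  forall eps delta : R, 0 < eps -> 0 < delta ->
    \forall T \near \oo,
      exists A : set Omega, measurable A /\
        [set w | eps <= `| theta_hat T w - theta_star |] `<=` A /\
        (P A <= delta%:E)%E.
Proof.
move=> my st kmeas ksym kpd _ kb hmin hsig hTs _ _ hsep eps delta eps0 delta0.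
pose P0 := pfw P (my 0).
pose Ds := MMD k (Pth theta_star) P0.
have [g g0 hg] : exists2 g : R, 0 < g & forall th, Theta th -> eps <= `|th - theta_star| ->
    Ds + g <= MMD k (Pth th) P0.
  have lb : forall th, Theta th -> eps <= `|th - theta_star| ->
      (ereal_inf [set (MMD k (Pth th) (pushforward P (y 0)))%:E
               | th in [set th | Theta th /\ (eps <= `| th - theta_star |)%R]] <=
       (MMD k (Pth th) P0)%:E)%E.
    by move=> th Th hth; apply: ereal_inf_lbound; exists th.
  move: (hsep eps eps0) lb.
  case: (ereal_inf _) => [r| |] hs lb.
  - exists (r - Ds); first by rewrite subr_gt0 -lte_fin.
    by move=> th Th hth; have := lb th Th hth; rewrite lee_fin; lra.
  - by exists 1 => // th Th hth; have := lb th Th hth; rewrite leye_eq.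
  - by move: hs; rewrite ltNge leNye.
pose c := (g / 2) ^+ 2.
have c0 : 0 < c by rewrite exprn_gt0 // divr_gt0.
have cd0 : 0 < c * delta by rewrite mulr_gt0.
have h1 := cvgr0_norm_lt _ hsig (c * delta / 4) (divr_gt0 cd0 (ltr0n _ 4)).
pose N := (Num.bound (4 / (c * delta))).+1.
have hN := archi_boundP (ltW (divr_gt0 (ltr0n R 4) cd0)).
near=> T.
have T0 : (0 < T)%N by near: T; exact: nbhs_infty_gt.
have HS : `|Sigma P y k T / T%:R| < c * delta / 4 by near: T; exact: h1.
have HN : (N <= T)%N by near: T; exact: nbhs_infty_ge.
pose Z := Zq k y P0 T.
have bZ : bm Z by exact: bmZq.
pose A := Z @^-1` `[c, +oo[%classic.
have mA : measurable A.
  case: bZ => mZ _; rewrite -[A]setTI; apply: mZ => //; exact: measurable_itv.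
exists A; split; [exact: mA|split].
- move=> w /= hw.
  have [Th hmw] := hmin T w T0.
  have e1 := hg _ Th hw.
  have e2 := tri1 kmeas ksym kpd kb y (Pth (theta_hat T w)) P0 w T0.
  have e3 := hmw theta_star hTs.
  have e4 := tri2 kmeas ksym kpd kb y (Pth theta_star) P0 w T0.
  have Z0 : 0 <= Z w by exact: Zq_ge0.
  have sZ := sqr_sqrtr Z0.
  have hs : g / 2 <= Num.sqrt (Z w) by exact: aux_tri e1 e2 e3 e4.
  rewrite /A /= in_itv /= andbT /c -sZ.
  have g2 : 0 <= g / 2 by rewrite divr_ge0 // ltW.
  by rewrite ler_pXn2r // ?nnegrE // sqrtr_ge0.
- have bI : bm (fun w => c * \1_A w).
    apply: bmZ; split; first exact: measurable_indic.
    by exists 1 => w; rewrite indicE; case: (w \in A); rewrite ?normr1 ?normr0.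
  have RI : RInt P (fun w => c * \1_A w) = c * fine (P A).
    rewrite RIntZ; last first.
      split; first exact: measurable_indic.
      by exists 1 => w; rewrite indicE; case: (w \in A); rewrite ?normr1 ?normr0.
    by rewrite /RInt integral_indic // setIT.
  have le1 : RInt P (fun w => c * \1_A w) <= RInt P Z.
    apply: RInt_le => // w; rewrite indicE.
    case: (boolP (w \in A)) => [/set_mem|_].
      by rewrite /A /= in_itv /= andbT mulr1.
    by rewrite mulr0; exact: Zq_ge0.
  have EB : RInt P Z <= 2 / T%:R + 2 * (Sigma P y k T / T%:R) by exact: EZ_bound.
  have t2 : 2 / T%:R <= c * delta / 2.
    apply: aux_T => //; apply: lt_le_trans hN _.
    rewrite /N in HN; have := HN; rewrite -(ler_nat R) => HN'.
    apply: le_trans HN'; rewrite ler_nat; exact: leqnSn.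
  have finPA : P A \is a fin_num.
    rewrite ge0_fin_numE ?measure_ge0 //; apply: le_lt_trans (probability_le1 P mA) _.
    exact: ltey.
  rewrite -(fineK finPA) lee_fin.
  apply: (aux_fin c0 _ EB t2 HS); rewrite -RI; exact: le1.
Unshelve. all: end_near.
Qed.
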